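(* (1) The model admits a unique single-strain ($I_1$)-infection equilibrium $E_1=(\bar S,\bar V_1,\bar I_1,0)$ with $\bar S,\bar V_1,\bar I_1>0$ if and only if $\mathcal{R}_1>1$. (2) The model admits a single-strain ($I_2$)-infection equilibrium $E_2=(\tilde S,\tilde V_1,0,\tilde I_2)$ with $\tilde S,\tilde V_1,\tilde I_2>0$ if and only if $\mathcal{R}_2>1$. Moreover: - if $-\alpha_2r\mu-\alpha_2\mu^2+k\Lambda r<0$, then $E_2$ is unique; - if $-\alpha_2r\mu-\alpha_2\mu^2+k\Lambda r>0$, then the model has at most one single-strain ($I_2$)-infection equilibrium with $\tilde I_2$ in the interval $\left[\frac{-r\alpha_2-\alpha_2\mu+\sqrt{r\alpha_2(r\alpha_2+\alpha_2\mu+k\Lambda)}}{\alpha_2k},\frac{\Lambda}{\alpha_2}\right]$.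
   Context: The model is $\dot S=\Lambda-F_1(S,I_1)-F_2(S,I_2)-\lambda S$, $\dot V_1=rS-(\mu+kI_2)V_1$, $\dot I_1=F_1(S,I_1)-\alpha_1I_1$, $\dot I_2=F_2(S,I_2)+kI_2V_1-\alpha_2I_2$ on $\mathbb{R}^4_+$. The constants $\Lambda,\mu,r,k,\gamma_1,\gamma_2>0$ and $v_1,v_2\ge0$; $\lambda=r+\mu$ and $\alpha_i=\gamma_i+v_i+\mu$. For $i=1,2$ the incidence functions satisfy: - (H1) $F_i(S,I_i)=I_if_i(S,I_i)$ with $F_i,f_i\in C^2(\mathbb{R}^2_+,\mathbb{R}_+)$ and $F_i(0,I_i)=F_i(S,0)=0$; - (H2) $\partial f_i/\partial S>0$ and $\partial f_i/\partial I_i\le0$ on $\mathbb{R}^2_+$; - (H3) $\lim_{I_i\to0^+}F_i(S,I_i)/I_i$ exists and is positive for $S>0$. Let $S^0=\Lambda/\lambda$, $V_1^0=r\Lambda/(\mu\lambda)$ and $\sigma_i=\frac{\partial F_i}{\partial I_i}(S^0,0)$. Set $\mathcal{R}_1=\sigma_1/\alpha_1$ and $\mathcal{R}_2=\sigma_2/\alpha_2+\frac{kr\Lambda}{\alpha_2\mu\lambda}$. *)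

(* Defs.v *)
From Stdlib Require Import Reals.
From Coquelicot Require Import Coquelicot.
Open Scope R_scope.

Definition pd1 (g : R -> R -> R) (x y : R) : R := Derive (fun t => g t y) x.
Definition pd2 (g : R -> R -> R) (x y : R) : R := Derive (fun t => g x t) y.

Definition uncurry2 (g : R -> R -> R) : R * R -> R := fun z => g (fst z) (snd z).

Definition C1_2d (g : R -> R -> R) : Prop :=
  forall x y : R,
    ex_derive (fun t => g t y) x /\ ex_derive (fun t => g x t) y /\
    continuous (uncurry2 g) (x, y) /\
    continuous (uncurry2 (pd1 g)) (x, y) /\
    continuous (uncurry2 (pd2 g)) (x, y).

Definition C2_2d (g : R -> R -> R) : Prop :=
  C1_2d g /\ C1_2d (pd1 g) /\ C1_2d (pd2 g).

(* Hypotheses (H1)-(H3) on an incidence function F = I f.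
   F, f are given on all of R^2 (C^2 there, i.e. C^2 up to the boundary of
   R^2_+); the remaining conditions are imposed on R^2_+. *)
Definition incidence_hyp (F f : R -> R -> R) : Prop :=
  C2_2d F /\ C2_2d f /\
  (forall S I, 0 <= S -> 0 <= I -> F S I = I * f S I) /\
  (forall S I, 0 <= S -> 0 <= I -> 0 <= F S I /\ 0 <= f S I) /\
  (forall I, 0 <= I -> F 0 I = 0) /\
  (forall S, 0 <= S -> F S 0 = 0) /\
  (forall S I, 0 <= S -> 0 <= I -> 0 < pd1 f S I /\ pd2 f S I <= 0) /\
  (forall S, 0 < S -> exists l : R, 0 < l /\
      filterlim (fun I => F S I / I) (at_right 0) (locally l)).

Definition is_equilibrium (Lambda mu r k alpha1 alpha2 : R)
    (F1 F2 : R -> R -> R) (S V1 I1 I2 : R) : Prop :=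
  0 <= S /\ 0 <= V1 /\ 0 <= I1 /\ 0 <= I2 /\
  Lambda - F1 S I1 - F2 S I2 - (r + mu) * S = 0 /\
  r * S - (mu + k * I2) * V1 = 0 /\
  F1 S I1 - alpha1 * I1 = 0 /\
  F2 S I2 + k * I2 * V1 - alpha2 * I2 = 0.

Definition is_E1 Lambda mu r k alpha1 alpha2 F1 F2 (S V1 I1 : R) : Prop :=
  0 < S /\ 0 < V1 /\ 0 < I1 /\
  is_equilibrium Lambda mu r k alpha1 alpha2 F1 F2 S V1 I1 0.

Definition is_E2 Lambda mu r k alpha1 alpha2 F1 F2 (S V1 I2 : R) : Prop :=
  0 < S /\ 0 < V1 /\ 0 < I2 /\
  is_equilibrium Lambda mu r k alpha1 alpha2 F1 F2 S V1 0 I2.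

Definition S0 (Lambda mu r : R) : R := Lambda / (r + mu).
Definition sigma (F : R -> R -> R) (Lambda mu r : R) : R :=
  pd2 F (S0 Lambda mu r) 0.

Definition repr1 (F1 : R -> R -> R) (Lambda mu r alpha1 : R) : R :=
  sigma F1 Lambda mu r / alpha1.
Definition repr2 (F2 : R -> R -> R) (Lambda mu r k alpha2 : R) : R :=
  sigma F2 Lambda mu r / alpha2 + k * r * Lambda / (alpha2 * mu * (r + mu)).

(* Main.v *)
Require Import Defs.
From Stdlib Require Import Reals Lra Psatz Ranalysis5.
From Coquelicot Require Import Coquelicot.
Open Scope R_scope.


Lemma eq_eps a b : (forall eps, 0 < eps -> Rabs (a - b) < eps) -> a = b.
Proof.
  intros H. destruct (Req_dec a b) as [|Hn]; auto.
  assert (0 < Rabs (a - b)) by (apply Rabs_pos_lt; lra).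
  specialize (H _ H0). lra.
Qed.

Lemma sigma_eq F f x : incidence_hyp F f -> 0 <= x -> pd2 F x 0 = f x 0.
Proof.
  intros HF Hx.
  destruct HF as [[C1F _] [[C1f _] [Heq [Hnn [H0I [HS0 [Hmon _]]]]]]].
  assert (D : derivable_pt_lim (fun t => F x t) 0 (pd2 F x 0)).
  { apply is_derive_Reals. apply Derive_correct. apply (C1F x 0). }
  assert (C : continuity_pt (fun t => f x t) 0).
  { apply continuity_pt_filterlim. apply (ex_derive_continuous (fun t => f x t)). apply (C1f x 0). }
  apply eq_eps. intros eps Heps.
  destruct (D (eps/2)) as [d1 Hd1]; [lra|].
  unfold continuity_pt, continue_in, limit1_in, limit_in in C.
  destruct (C (eps/2)) as [al [Hal Hc]]; [lra|].
  set (h := Rmin d1 al / 2).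
  assert (Hh0 : 0 < h).
  { unfold h. destruct d1 as [d1v d1p]; simpl in *.
    assert (0 < Rmin d1v al) by (apply Rmin_glb_lt; lra). lra. }
  assert (Hh1 : h < d1).
  { unfold h. pose proof (Rmin_l d1 al). destruct d1; simpl in *. lra. }
  assert (Hh2 : h < al).
  { unfold h. pose proof (Rmin_r d1 al). destruct d1; simpl in *.
    assert (0 < Rmin pos al) by (apply Rmin_glb_lt; lra). lra. }
  specialize (Hd1 h).
  assert (E1 : Rabs ((F x (0 + h) - F x 0) / h - pd2 F x 0) < eps / 2).
  { apply Hd1; [lra|]. rewrite Rabs_right; lra. }
  rewrite HS0 in E1 by lra. rewrite Rplus_0_l, Heq in E1 by lra.
  replace ((h * f x h - 0) / h) with (f x h) in E1 by (field; lra).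
  assert (E2 : Rabs (f x h - f x 0) < eps / 2).
  { specialize (Hc h). simpl in Hc. unfold R_dist in Hc. apply Hc.
    split. split; [exact I| lra]. rewrite Rminus_0_r, Rabs_right; lra. }
  apply Rabs_def2 in E1. apply Rabs_def2 in E2. apply Rabs_def1; lra.
Qed.


Lemma f_incr_S F f S S' I : incidence_hyp F f -> 0 <= S -> S < S' -> 0 <= I ->
  f S I < f S' I.
Proof.
  intros HF HS HSS HI.
  destruct HF as [_ [[C1f _] [Heq [Hnn [H0I [HS0 [Hmon _]]]]]]].
  edestruct (MVT_gen (fun t => f t I) S S' (fun t => pd1 f t I)) as [c [Hc E]].
  - intros x Hx. apply (Derive_correct (fun t => f t I)). apply (C1f x I).
  - intros x Hx. apply continuity_pt_filterlim.
    apply (ex_derive_continuous (fun t => f t I)). apply (C1f x I).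
  - rewrite Rmin_left in Hc by lra. rewrite Rmax_right in Hc by lra.
    destruct (Hmon c I) as [Hp _]; [lra|lra|].
    simpl in E. assert (0 < pd1 f c I * (S' - S)) by (apply Rmult_lt_0_compat; lra).
    lra.
Qed.

Lemma f_decr_I F f S I I' : incidence_hyp F f -> 0 <= S -> 0 <= I -> I <= I' ->
  f S I' <= f S I.
Proof.
  intros HF HS HI HII.
  destruct (Req_dec I I') as [<-|Hne]; [lra|].
  destruct HF as [_ [[C1f _] [Heq [Hnn [H0I [HS0 [Hmon _]]]]]]].
  edestruct (MVT_gen (fun t => f S t) I I' (fun t => pd2 f S t)) as [c [Hc E]].
  - intros x Hx. apply (Derive_correct (fun t => f S t)). apply (C1f S x).
  - intros x Hx. apply continuity_pt_filterlim.
    apply (ex_derive_continuous (fun t => f S t)). apply (C1f S x).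
  - rewrite Rmin_left in Hc by lra. rewrite Rmax_right in Hc by lra.
    destruct (Hmon S c) as [_ Hp]; [lra|lra|].
    simpl in E. assert (0 <= - pd2 f S c * (I' - I)) by (apply Rmult_le_pos; lra).
    lra.
Qed.

Lemma f_le_S F f S S' I : incidence_hyp F f -> 0 <= S -> S <= S' -> 0 <= I ->
  f S I <= f S' I.
Proof.
  intros. destruct (Req_dec S S') as [<-|]; [lra|].
  apply Rlt_le; eapply f_incr_S; eauto; lra.
Qed.

Lemma cont_comp F f s a : incidence_hyp F f -> continuity_pt s a ->
  continuity_pt (fun I => f (s I) I) a.
Proof.
  intros HF Hs.
  destruct HF as [_ [[C1f _] _]].
  apply continuity_pt_filterlim.
  apply (continuous_comp_2 s (fun x => x) f).
  - apply continuity_pt_filterlim; auto.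
  - apply continuous_id.
  - apply (C1f (s a) a).
Qed.

Lemma f_zero F f I : incidence_hyp F f -> 0 < I -> f 0 I = 0.
Proof.
  intros HF HI.
  destruct HF as [_ [_ [Heq [Hnn [H0I [HS0 [Hmon _]]]]]]].
  pose proof (H0I I ltac:(lra)). rewrite Heq in H by lra.
  apply Rmult_integral in H. destruct H; lra.
Qed.

Lemma lt1_div a b : 0 < b -> b < a -> 1 < a / b.
Proof.
  intros. apply (Rmult_lt_reg_r b); auto. unfold Rdiv.
  rewrite Rmult_assoc, Rinv_l, Rmult_1_r by lra. lra.
Qed.

Lemma lt1_div_inv a b : 0 < b -> 1 < a / b -> b < a.
Proof.
  intros. apply (Rmult_lt_compat_r b) in H0; auto. unfold Rdiv in H0.
  rewrite Rmult_assoc, Rinv_l, Rmult_1_r in H0 by lra. lra.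
Qed.


Lemma E1_char Lambda mu r k a1 a2 F1 f1 F2 f2 S V I :
  incidence_hyp F1 f1 -> incidence_hyp F2 f2 -> 0 < mu -> 0 < r ->
  is_E1 Lambda mu r k a1 a2 F1 F2 S V I ->
  0 < S /\ 0 < V /\ 0 < I /\ f1 S I = a1 /\ Lambda - a1 * I - (r + mu) * S = 0 /\
  V = r * S / mu.
Proof.
  intros HF1 HF2 Hmu Hr [HS [HV [HI [_ [_ [_ [_ [e1 [e2 [e3 e4]]]]]]]]]].
  pose proof HF1 as [_ [_ [Heq1 _]]].
  pose proof HF2 as [_ [_ [_ [_ [_ [HS02 _]]]]]].
  rewrite HS02 in e1 by lra. rewrite Heq1 in e1, e3 by lra.
  assert (f1 S I = a1).
  { assert (I * (f1 S I - a1) = 0) by lra.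
    apply Rmult_integral in H. destruct H; lra. }
  repeat split; try lra.
  field_simplify_eq; lra.
Qed.

Lemma part1a Lambda mu r k a1 a2 F1 f1 F2 f2 S V I :
  incidence_hyp F1 f1 -> incidence_hyp F2 f2 -> 0 < Lambda -> 0 < mu -> 0 < r -> 0 < a1 ->
  is_E1 Lambda mu r k a1 a2 F1 F2 S V I -> 1 < repr1 F1 Lambda mu r a1.
Proof.
  intros HF1 HF2 HL Hmu Hr Ha HE.
  destruct (E1_char _ _ _ _ _ _ _ _ _ _ _ _ _ HF1 HF2 Hmu Hr HE)
    as [HS [HV [HI [Hf [e1 eV]]]]].
  unfold repr1, Defs.sigma. rewrite sigma_eq with (f := f1); auto.
  2: unfold S0; apply Rlt_le, Rdiv_lt_0_compat; lra.
  apply lt1_div; auto.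
  assert (S < S0 Lambda mu r).
  { unfold S0. apply (Rmult_lt_reg_r (r + mu)); [lra|].
    field_simplify; [|lra]. nra. }
  pose proof (f_incr_S F1 f1 S _ 0 HF1 ltac:(lra) H ltac:(lra)).
  pose proof (f_decr_I F1 f1 S 0 I HF1 ltac:(lra) ltac:(lra) ltac:(lra)).
  lra.
Qed.

Lemma part1b Lambda mu r k a1 a2 F1 f1 F2 f2 :
  incidence_hyp F1 f1 -> incidence_hyp F2 f2 -> 0 < Lambda -> 0 < mu -> 0 < r -> 0 < a1 ->
  1 < repr1 F1 Lambda mu r a1 ->
  exists S V I, is_E1 Lambda mu r k a1 a2 F1 F2 S V I /\
       forall S' V' I', is_E1 Lambda mu r k a1 a2 F1 F2 S' V' I' ->
         S' = S /\ V' = V /\ I' = I.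
Proof.
  intros HF1 HF2 HL Hmu Hr Ha Hrep.
  unfold repr1, Defs.sigma in Hrep. rewrite sigma_eq with (f := f1) in Hrep; auto.
  2: unfold S0; apply Rlt_le, Rdiv_lt_0_compat; lra.
  apply lt1_div_inv in Hrep; auto.
  set (g := fun I => a1 - f1 ((Lambda - a1 * I) / (r + mu)) I).
  destruct (IVT_interv g 0 (Lambda / a1)) as [z [Hz Hgz]].
  - intros x _. unfold g. apply continuity_pt_minus. apply continuity_pt_const; intros ? ?; auto.
    apply cont_comp with (F := F1); auto. reg.
  - apply Rdiv_lt_0_compat; lra.
  - unfold g. replace ((Lambda - a1 * 0) / (r + mu)) with (S0 Lambda mu r)
      by (unfold S0; field; lra). lra.
  - unfold g. replace ((Lambda - a1 * (Lambda / a1)) / (r + mu)) with 0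
      by (field; lra). rewrite f_zero with (F := F1); auto.
    lra. apply Rdiv_lt_0_compat; lra.
  - unfold g in Hgz.
    set (S := (Lambda - a1 * z) / (r + mu)) in *.
    assert (Hz0 : z <> 0).
    { intros ->. replace S with (S0 Lambda mu r) in Hgz by (unfold S, S0; field; lra). lra. }
    assert (Hz1 : z <> Lambda / a1).
    { intros Hzz. assert (S = 0) by (unfold S; rewrite Hzz; field; lra).
      rewrite H, f_zero with (F := F1) in Hgz; auto; try lra.
      }
    assert (HzL : a1 * z < Lambda).
    { assert (z < Lambda / a1) by lra.
      apply (Rmult_lt_compat_l a1) in H; auto.
      replace (a1 * (Lambda / a1)) with Lambda in H by (field; lra). lra. }
    assert (HS : 0 < S) by (unfold S; apply Rdiv_lt_0_compat; lra).
    assert (Hf : f1 S z = a1) by lra.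
    pose proof HF1 as [_ [_ [Heq1 _]]].
    pose proof HF2 as [_ [_ [_ [_ [_ [HS02 _]]]]]].
    assert (HE : is_E1 Lambda mu r k a1 a2 F1 F2 S (r * S / mu) z).
    { assert (0 < r * S / mu) by (apply Rdiv_lt_0_compat; nra).
      unfold is_E1, is_equilibrium.
      rewrite HS02 by lra. rewrite Heq1 by lra. rewrite Hf.
      repeat split; try lra.
      - unfold S. field. lra.
      - field. lra. }
    exists S, (r * S / mu), z. split; auto.
    intros S' V' I' HE'.
    destruct (E1_char _ _ _ _ _ _ _ _ _ _ _ _ _ HF1 HF2 Hmu Hr HE')
      as [HS' [HV' [HI' [Hf' [e1' eV']]]]].
    assert (eS : (r + mu) * S = Lambda - a1 * z) by (unfold S; field; lra).
    clearbody S.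
    assert (I' = z).
    { destruct (Rtotal_order I' z) as [Hlt|[Heq|Hgt]]; auto.
      - assert (S < S') by nra.
        pose proof (f_incr_S F1 f1 S S' I' HF1 ltac:(lra) H ltac:(lra)).
        pose proof (f_decr_I F1 f1 S I' z HF1 ltac:(lra) ltac:(lra) ltac:(lra)).
        lra.
      - assert (S' < S) by nra.
        pose proof (f_incr_S F1 f1 S' S z HF1 ltac:(lra) H ltac:(lra)).
        pose proof (f_decr_I F1 f1 S' z I' HF1 ltac:(lra) ltac:(lra) ltac:(lra)).
        lra. }
    subst I'.
    assert (S' = S) by (apply (Rmult_eq_reg_l (r + mu)); lra).
    subst S'. auto.
Qed.


Lemma E2_char Lambda mu r k a1 a2 F1 f1 F2 f2 S V I :
  incidence_hyp F1 f1 -> incidence_hyp F2 f2 -> 0 < mu -> 0 < r -> 0 < k ->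
  is_E2 Lambda mu r k a1 a2 F1 F2 S V I ->
  0 < S /\ 0 < V /\ 0 < I /\ f2 S I + k * V = a2 /\
  S * (mu * (r + mu + k * I)) = (Lambda - a2 * I) * (mu + k * I) /\
  V * (mu + k * I) = r * S /\ (r + mu) * S <= Lambda.
Proof.
  intros HF1 HF2 Hmu Hr Hk [HS [HV [HI [_ [_ [_ [_ [e1 [e2 [e3 e4]]]]]]]]]].
  pose proof HF2 as [_ [_ [Heq2 [Hnn2 _]]]].
  pose proof HF1 as [_ [_ [_ [_ [_ [HS01 _]]]]]].
  rewrite HS01 in e1 by lra.
  assert (Hn : 0 <= F2 S I) by (apply Hnn2; lra).
  rewrite Heq2 in e1, e4 by lra.
  assert (Hf : f2 S I + k * V = a2).
  { assert (I * (f2 S I + k * V - a2) = 0) by lra.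
    apply Rmult_integral in H. destruct H; lra. }
  rewrite Heq2 in Hn by lra.
  repeat split; try lra.
  - assert (f2 S I = a2 - k * V) by lra. rewrite H in e1.
    assert (H0 : V * (mu + k * I) = r * S) by lra.
    assert (E : Lambda - a2 * I = (r + mu) * S - k * I * V) by lra.
    rewrite E.
    replace (((r + mu) * S - k * I * V) * (mu + k * I)) with
      ((r + mu) * S * (mu + k * I) - k * I * (V * (mu + k * I))) by ring.
    rewrite H0. ring.
Qed.

Lemma part2a Lambda mu r k a1 a2 F1 f1 F2 f2 S V I :
  incidence_hyp F1 f1 -> incidence_hyp F2 f2 -> 0 < Lambda -> 0 < mu -> 0 < r -> 0 < k ->
  0 < a2 ->
  is_E2 Lambda mu r k a1 a2 F1 F2 S V I -> 1 < repr2 F2 Lambda mu r k a2.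
Proof.
  intros HF1 HF2 HL Hmu Hr Hk Ha HE.
  destruct (E2_char _ _ _ _ _ _ _ _ _ _ _ _ _ HF1 HF2 Hmu Hr Hk HE)
    as [HS [HV [HI [Hf [eS [eV Hle]]]]]].
  unfold repr2, Defs.sigma. rewrite sigma_eq with (f := f2); auto.
  2: unfold S0; apply Rlt_le, Rdiv_lt_0_compat; lra.
  set (X := k * r * Lambda / (mu * (r + mu))).
  assert (eX : X * (mu * (r + mu)) = k * r * Lambda) by (unfold X; field; lra).
  replace (f2 (S0 Lambda mu r) 0 / a2 + k * r * Lambda / (a2 * mu * (r + mu)))
    with ((f2 (S0 Lambda mu r) 0 + X) / a2) by (unfold X; field; lra).
  apply lt1_div; auto.
  assert (HS0 : S <= S0 Lambda mu r).
  { unfold S0. apply (Rmult_le_reg_r (r + mu)); [lra|].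
    field_simplify; [|lra]. lra. }
  pose proof (f_le_S F2 f2 S _ 0 HF2 ltac:(lra) HS0 ltac:(lra)).
  pose proof (f_decr_I F2 f2 S 0 I HF2 ltac:(lra) ltac:(lra) ltac:(lra)).
  assert (k * V < X).
  { assert (0 < V * (k * I)) by (apply Rmult_lt_0_compat; nra).
    assert (mu * V < r * S) by lra.
    assert (mu * V * (r + mu) < r * S * (r + mu)) by (apply Rmult_lt_compat_r; lra).
    assert (r * ((r + mu) * S) <= r * Lambda) by (apply Rmult_le_compat_l; lra).
    assert (mu * V * (r + mu) < r * Lambda) by lra.
    assert (k * V * (mu * (r + mu)) < X * (mu * (r + mu))) by nra.
    assert (0 < mu * (r + mu)) by nra.
    nra. }
  lra.
Qed.


Lemma part2b Lambda mu r k a1 a2 F1 f1 F2 f2 :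
  incidence_hyp F1 f1 -> incidence_hyp F2 f2 -> 0 < Lambda -> 0 < mu -> 0 < r -> 0 < k ->
  0 < a2 ->
  1 < repr2 F2 Lambda mu r k a2 -> exists S V I, is_E2 Lambda mu r k a1 a2 F1 F2 S V I.
Proof.
  intros HF1 HF2 HL Hmu Hr Hk Ha Hrep.
  unfold repr2, Defs.sigma in Hrep. rewrite sigma_eq with (f := f2) in Hrep; auto.
  2: unfold S0; apply Rlt_le, Rdiv_lt_0_compat; lra.
  set (X := k * r * Lambda / (mu * (r + mu))) in *.
  replace (f2 (S0 Lambda mu r) 0 / a2 + k * r * Lambda / (a2 * mu * (r + mu)))
    with ((f2 (S0 Lambda mu r) 0 + X) / a2) in Hrep by (unfold X; field; lra).
  apply lt1_div_inv in Hrep; auto.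
  set (Sf := fun I => (Lambda - a2 * I) * (mu + k * I) / (mu * (r + mu + k * I))).
  set (Tf := fun I => k * r * (Lambda - a2 * I) / (mu * (r + mu + k * I))).
  set (h := fun I => a2 - f2 (Sf I) I - Tf I).
  destruct (IVT_interv h 0 (Lambda / a2)) as [z [Hz Hgz]].
  - intros x Hx. unfold h. apply continuity_pt_minus. apply continuity_pt_minus.
    apply continuity_pt_const; intros ? ?; auto.
    apply cont_comp with (F := F2); auto. unfold Sf. reg.
    apply Rmult_integral_contrapositive; split; nra.
    unfold Tf. reg. apply Rmult_integral_contrapositive; split; nra.
  - apply Rdiv_lt_0_compat; lra.
  - unfold h. replace (Sf 0) with (S0 Lambda mu r)
      by (unfold Sf, S0; field; split; lra).
    replace (Tf 0) with X by (unfold Tf, X; field; split; lra). lra.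
  - unfold h. replace (Sf (Lambda / a2)) with 0 by (unfold Sf; field; split; nra).
    replace (Tf (Lambda / a2)) with 0 by (unfold Tf; field; split; nra).
    rewrite f_zero with (F := F2); auto.
    lra. apply Rdiv_lt_0_compat; lra.
  - unfold h in Hgz.
    assert (Hz0 : z <> 0).
    { intros ->. replace (Sf 0) with (S0 Lambda mu r) in Hgz
        by (unfold Sf, S0; field; split; lra).
      replace (Tf 0) with X in Hgz by (unfold Tf, X; field; split; lra). lra. }
    assert (Hz1 : z <> Lambda / a2).
    { intros ->. replace (Sf (Lambda / a2)) with 0 in Hgz by (unfold Sf; field; split; nra).
      replace (Tf (Lambda / a2)) with 0 in Hgz by (unfold Tf; field; split; nra).
      rewrite f_zero with (F := F2) in Hgz; auto.
      lra. apply Rdiv_lt_0_compat; lra. }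
    assert (HzL : a2 * z < Lambda).
    { assert (z < Lambda / a2) by lra.
      apply (Rmult_lt_compat_l a2) in H; auto.
      replace (a2 * (Lambda / a2)) with Lambda in H by (field; lra). lra. }
    assert (Hzp : 0 < z) by lra.
    set (S := Sf z) in *.
    assert (HS : 0 < S).
    { unfold S, Sf. apply Rdiv_lt_0_compat; apply Rmult_lt_0_compat; nra. }
    set (V := r * S / (mu + k * z)).
    assert (HV : 0 < V) by (unfold V; apply Rdiv_lt_0_compat; nra).
    assert (Hf : f2 S z = a2 - Tf z) by lra.
    pose proof HF2 as [_ [_ [Heq2 _]]].
    pose proof HF1 as [_ [_ [_ [_ [_ [HS01 _]]]]]].
    exists S, V, z.
    unfold is_E2, is_equilibrium.
    rewrite HS01 by lra. rewrite Heq2 by lra. rewrite Hf.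
    repeat split; try lra.
    + unfold S, Sf, Tf. field. split; nra.
    + unfold V. field. nra.
    + unfold V, S, Sf, Tf. field. split; nra.
Qed.


Definition qq Lambda mu r k a2 x :=
  a2 * mu * (r + mu) - k * r * Lambda + 2 * a2 * (r + mu) * k * x + a2 * k * k * x * x.

Lemma uniq_core Lambda mu r k a1 a2 F1 f1 F2 f2 S V I S' V' I' :
  incidence_hyp F1 f1 -> incidence_hyp F2 f2 -> 0 < Lambda -> 0 < mu -> 0 < r -> 0 < k ->
  0 < a2 ->
  is_E2 Lambda mu r k a1 a2 F1 F2 S V I -> is_E2 Lambda mu r k a1 a2 F1 F2 S' V' I' ->
  I < I' -> 0 <= qq Lambda mu r k a2 I -> False.
Proof.
  intros HF1 HF2 HL Hmu Hr Hk Ha HE HE' HII Hq.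
  destruct (E2_char _ _ _ _ _ _ _ _ _ _ _ _ _ HF1 HF2 Hmu Hr Hk HE)
    as [HS [HV [HI [Hf [eS [eV Hle]]]]]].
  destruct (E2_char _ _ _ _ _ _ _ _ _ _ _ _ _ HF1 HF2 Hmu Hr Hk HE')
    as [HS' [HV' [HI' [Hf' [eS' [eV' Hle']]]]]].
  unfold qq in Hq.
  set (D := r + mu + k * I) in *. set (D' := r + mu + k * I') in *.
  assert (HD : 0 < D) by (unfold D; nra).
  assert (HD' : 0 < D') by (unfold D'; nra).
  set (M := a2 * mu * (r + mu) - k * r * Lambda + a2 * (r + mu) * k * (I + I')
            + a2 * k * k * I * I').
  assert (HM : 0 <= M).
  { unfold M.
    assert (0 <= a2 * (r + mu) * k * (I' - I)).
    { apply Rmult_le_pos; [|lra]. apply Rmult_le_pos; [|lra]. nra. }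
    assert (0 <= a2 * k * k * I * (I' - I)).
    { apply Rmult_le_pos; [|lra]. apply Rmult_le_pos; [|lra].
      apply Rmult_le_pos; [|lra]. nra. }
    nra. }
  assert (XS : (S - S') * (mu * D * D') =
     (I' - I) * M).
  { transitivity (S * (mu * D) * D' - S' * (mu * D') * D); [ring|].
    rewrite eS, eS'. unfold M, D, D'. ring. }
  assert (HSS : S' <= S).
  { assert (0 <= (I' - I) * M) by (apply Rmult_le_pos; lra).
    assert (0 < mu * D * D') by (apply Rmult_lt_0_compat; [apply Rmult_lt_0_compat|]; lra).
    destruct (Rle_lt_dec S' S); auto.
    assert ((S - S') * (mu * D * D') < 0).
    { apply Ropp_lt_cancel. rewrite Ropp_0, Ropp_mult_distr_l.
      apply Rmult_lt_0_compat; lra. }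
    lra. }
  assert (eVV : V * (mu * D) = r * (Lambda - a2 * I)).
  { apply (Rmult_eq_reg_r (mu + k * I)); [|nra].
    transitivity (r * (S * (mu * D))); [|rewrite eS; ring].
    transitivity ((V * (mu + k * I)) * (mu * D)); [ring|]. rewrite eV. ring. }
  assert (eVV' : V' * (mu * D') = r * (Lambda - a2 * I')).
  { apply (Rmult_eq_reg_r (mu + k * I')); [|nra].
    transitivity (r * (S' * (mu * D'))); [|rewrite eS'; ring].
    transitivity ((V' * (mu + k * I')) * (mu * D')); [ring|]. rewrite eV'. ring. }
  assert (XV : (V - V') * (mu * D * D') = r * (I' - I) * (Lambda * k + a2 * (r + mu))).
  { transitivity (V * (mu * D) * D' - V' * (mu * D') * D); [ring|].
    rewrite eVV, eVV'. unfold D, D'. ring. }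
  assert (HVV : V' < V).
  { assert (0 < r * (I' - I) * (Lambda * k + a2 * (r + mu))).
    { apply Rmult_lt_0_compat; [apply Rmult_lt_0_compat|]; nra. }
    assert (0 < mu * D * D') by (apply Rmult_lt_0_compat; [apply Rmult_lt_0_compat|]; lra).
    destruct (Rlt_le_dec V' V); auto.
    assert ((V - V') * (mu * D * D') <= 0).
    { apply Ropp_le_cancel. rewrite Ropp_0, Ropp_mult_distr_l.
      apply Rmult_le_pos; lra. }
    lra. }
  pose proof (f_le_S F2 f2 S' S I HF2 ltac:(lra) HSS ltac:(lra)).
  pose proof (f_decr_I F2 f2 S' I I' HF2 ltac:(lra) ltac:(lra) ltac:(lra)).
  nra.
Qed.

Lemma uniq_gen Lambda mu r k a1 a2 F1 f1 F2 f2 S V I S' V' I' :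
  incidence_hyp F1 f1 -> incidence_hyp F2 f2 -> 0 < Lambda -> 0 < mu -> 0 < r -> 0 < k ->
  0 < a2 ->
  is_E2 Lambda mu r k a1 a2 F1 F2 S V I -> is_E2 Lambda mu r k a1 a2 F1 F2 S' V' I' ->
  0 <= qq Lambda mu r k a2 I -> 0 <= qq Lambda mu r k a2 I' ->
  S' = S /\ V' = V /\ I' = I.
Proof.
  intros HF1 HF2 HL Hmu Hr Hk Ha HE HE' Hq Hq'.
  destruct (Rtotal_order I I') as [Hlt|[Heq|Hgt]].
  - exfalso. eapply (uniq_core Lambda mu r k a1 a2 F1 f1 F2 f2 S V I S' V' I'); eauto.
  - subst I'.
    destruct (E2_char _ _ _ _ _ _ _ _ _ _ _ _ _ HF1 HF2 Hmu Hr Hk HE)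
      as [HS [HV [HI [Hf [eS [eV Hle]]]]]].
    destruct (E2_char _ _ _ _ _ _ _ _ _ _ _ _ _ HF1 HF2 Hmu Hr Hk HE')
      as [HS' [HV' [HI' [Hf' [eS' [eV' Hle']]]]]].
    assert (S' = S).
    { apply (Rmult_eq_reg_r (mu * (r + mu + k * I))); [lra|].
      apply Rgt_not_eq. apply Rmult_lt_0_compat; nra. }
    subst S'. split; auto. split; auto.
    apply (Rmult_eq_reg_r (mu + k * I)); [lra|]. nra.
  - exfalso. eapply (uniq_core Lambda mu r k a1 a2 F1 f1 F2 f2 S' V' I' S V I); eauto.
Qed.


Lemma qq_lo Lambda mu r k a2 x : 0 < Lambda -> 0 < mu -> 0 < r -> 0 < k -> 0 < a2 ->
  (- r * a2 - a2 * mu + sqrt (r * a2 * (r * a2 + a2 * mu + k * Lambda))) / (a2 * k) <= x ->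
  0 <= qq Lambda mu r k a2 x.
Proof.
  intros HL Hmu Hr Hk Ha Hx.
  set (A := r * a2 * (r * a2 + a2 * mu + k * Lambda)) in *.
  assert (HA : 0 <= A) by (unfold A; apply Rmult_le_pos; nra).
  set (sq := sqrt A) in *.
  assert (Hsq : sq * sq = A) by (apply sqrt_sqrt; auto).
  assert (Hsq0 : 0 <= sq) by apply sqrt_pos.
  set (w := a2 * k * x + r * a2 + a2 * mu).
  assert (Hw : sq <= w).
  { apply (Rmult_le_compat_r (a2 * k)) in Hx; [|nra].
    replace ((- r * a2 - a2 * mu + sq) / (a2 * k) * (a2 * k)) with
      (- r * a2 - a2 * mu + sq) in Hx by (field; lra).
    unfold w. nra. }
  assert (A <= w * w) by nra.
  assert (a2 * qq Lambda mu r k a2 x = w * w - A) by (unfold qq, w, A; ring).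
  nra.
Qed.

Theorem mainTheorem4
  (Lambda mu r k gamma1 gamma2 v1 v2 : R) (F1 f1 F2 f2 : R -> R -> R)
  (HLambda : 0 < Lambda) (Hmu : 0 < mu) (Hr : 0 < r) (Hk : 0 < k)
  (Hg1 : 0 < gamma1) (Hg2 : 0 < gamma2) (Hv1 : 0 <= v1) (Hv2 : 0 <= v2)
  (HF1 : incidence_hyp F1 f1) (HF2 : incidence_hyp F2 f2) :
  let alpha1 := gamma1 + v1 + mu in
  let alpha2 := gamma2 + v2 + mu in
  let E1 := is_E1 Lambda mu r k alpha1 alpha2 F1 F2 in
  let E2 := is_E2 Lambda mu r k alpha1 alpha2 F1 F2 in
  (* (1) *)
  ((exists S V I, E1 S V I) -> 1 < repr1 F1 Lambda mu r alpha1) /\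
  (1 < repr1 F1 Lambda mu r alpha1 ->
     exists S V I, E1 S V I /\
       forall S' V' I', E1 S' V' I' -> S' = S /\ V' = V /\ I' = I) /\
  (* (2) *)
  ((exists S V I, E2 S V I) <-> 1 < repr2 F2 Lambda mu r k alpha2) /\
  (- alpha2 * r * mu - alpha2 * mu ^ 2 + k * Lambda * r < 0 ->
     forall S V I S' V' I', E2 S V I -> E2 S' V' I' ->
       S' = S /\ V' = V /\ I' = I) /\
  (- alpha2 * r * mu - alpha2 * mu ^ 2 + k * Lambda * r > 0 ->
     let lo := (- r * alpha2 - alpha2 * mu
                + sqrt (r * alpha2 * (r * alpha2 + alpha2 * mu + k * Lambda)))
               / (alpha2 * k) in
     let hi := Lambda / alpha2 in
     forall S V I S' V' I', E2 S V I -> E2 S' V' I' ->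
       lo <= I <= hi -> lo <= I' <= hi ->
       S' = S /\ V' = V /\ I' = I).
Proof.
  intros alpha1 alpha2 E1 E2.
  assert (Ha1 : 0 < alpha1) by (unfold alpha1; lra).
  assert (Ha2 : 0 < alpha2) by (unfold alpha2; lra).
  clearbody alpha1 alpha2. unfold E1, E2. clear E1 E2.
  split; [|split; [|split; [|split]]].
  - intros [S [V [I H]]]. eapply (part1a Lambda mu r k alpha1 alpha2 F1 f1 F2 f2); eauto.
  - intros H. eapply (part1b Lambda mu r k alpha1 alpha2 F1 f1 F2 f2); eauto.
  - split.
    + intros [S [V [I H]]]. eapply (part2a Lambda mu r k alpha1 alpha2 F1 f1 F2 f2); eauto.
    + intros Hrp. eapply (part2b Lambda mu r k alpha1 alpha2 F1 f1 F2 f2); eauto.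
  - intros Hc S V I S' V' I' H H'.
    assert (Hq : forall x, 0 <= x -> 0 <= qq Lambda mu r k alpha2 x).
    { intros x Hx. unfold qq. simpl in Hc.
      assert (0 <= 2 * alpha2 * (r + mu) * k * x) by
        (apply Rmult_le_pos; [|lra]; apply Rmult_le_pos; nra).
      assert (0 <= alpha2 * k * k * x * x) by
        (apply Rmult_le_pos; [|lra]; apply Rmult_le_pos; [|lra]; nra).
      nra. }
    destruct H as [HS [HV [HI HH]]]. destruct H' as [HS' [HV' [HI' HH']]].
    eapply (uniq_gen Lambda mu r k alpha1 alpha2 F1 f1 F2 f2); eauto; [split; auto; split; auto | split; auto; split; auto
      | apply Hq; lra | apply Hq; lra].
  - intros Hc S V I S' V' I' H H' [Hlo _] [Hlo' _].
    eapply (uniq_gen Lambda mu r k alpha1 alpha2 F1 f1 F2 f2); eauto; apply qq_lo; auto.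
Qed.
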